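(* Let $G$ be an undirected graph on $n$ vertices with double cover $H$, let $\alpha\in(0,1]$, let $s\in\mathbb{R}^{2n}_{\ge0}$, let $r\in\mathbb{R}^{2n}_{\ge0}$ be a nonnegative residual, and let $p=\sigma\circ\mathrm{apr}(\alpha,s,r)$ (approximate PageRank on $H$). Then for any $j\in[1,n-1]$, \[p[\mathrm{vol}(S^p_j)]\le\alpha\big(s[\mathrm{vol}(S^p_j)]+r[\mathrm{vol}(S^p_j)]\big)+\frac{1-\alpha}{2}\Big(p\big[\mathrm{vol}(S^p_j)-|\partial(S^p_j)|\big]+p\big[\mathrm{vol}(S^p_j)+|\partial(S^p_j)|\big]\Big).\]
   Context: The double cover $H$ has vertices $v_1,v_2$ per $v\in V_G$ and edges $\{u_1,v_2\},\{u_2,v_1\}$ per $\{u,v\}\in E_G$; $\mathrm{vol}$, $\deg$ and $\partial$ (set of edges leaving a set) are in $H$. $W=\frac12(I+D_H^{-1}A_H)$; $\mathrm{pr}(\alpha,s)$ is the unique solution of $\mathrm{pr}=\alpha s+(1-\alpha)\mathrm{pr}\,W$; $\mathrm{apr}(\alpha,s,r)$ is the $q$ with $q+\mathrm{pr}(\alpha,r)=\mathrm{pr}(\alpha,s)$. $(\sigma\circ q)(u_1)=\max(0,q(u_1)-q(u_2))$, $(\sigma\circ q)(u_2)=\max(0,q(u_2)-q(u_1))$. Sweep sets and Lovász–Simonovits curve: for $q\in\mathbb{R}^{V_H}_{\ge0}$ order the vertices $x_1,x_2,\dots$ so that $q(x_1)/\deg(x_1)\ge q(x_2)/\deg(x_2)\ge\cdots$,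 let $S^q_j=\{x_1,\dots,x_j\}$, and define $q[x]$ for $x\in[0,\mathrm{vol}(V_H)]$ by $q[0]=0$, $q[\mathrm{vol}(S^q_j)]=q(S^q_j)$, linear between consecutive such points. (Here $s[\cdot]$, $r[\cdot]$, $p[\cdot]$ are the curves of $s$, $r$, $p$ respectively.) *)

(* Defs.v *)
From HB Require Import structures.
From mathcomp Require Import all_boot all_order all_algebra.
Set Implicit Arguments. Unset Strict Implicit. Unset Printing Implicit Defensive.
Import Order.TTheory GRing.Theory Num.Theory.
Local Open Scope ring_scope.

Section DoubleCover.
Variables (R : realFieldType) (T : finType) (e : rel T).

(* Vertices of the double cover H: (v, false) = v_1, (v, true) = v_2. *)
Local Notation VH := (T * bool)%type.

Definition adjH (x y : VH) : bool := e x.1 y.1 && (x.2 != y.2).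

Definition edgesH : {set {set VH}} :=
  [set E : {set VH} | [exists x, exists y, adjH x y && (E == [set x; y])]].

Definition degH (x : VH) : nat := #|[set y | adjH x y]|.

Definition volH (S : {set VH}) : nat := (\sum_(x in S) degH x)%N.

Definition boundaryH (S : {set VH}) : {set {set VH}} :=
  [set E in edgesH | #|E :&: S| == 1%N].

Definition Wmat (x y : VH) : R :=
  2^-1 * (x == y)%:R + 2^-1 * ((adjH x y)%:R / (degH x)%:R).

Definition mulW (q : VH -> R) (y : VH) : R := \sum_(x : VH) q x * Wmat x y.

Definition is_pr (alpha : R) (s pr : VH -> R) : Prop :=
  forall y, pr y = alpha * s y + (1 - alpha) * mulW pr y.

Definition sigmaH (q : VH -> R) (x : VH) : R :=
  Num.max 0 (q x - q (x.1, ~~ x.2)).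

Definition ratio (q : VH -> R) (x : VH) : R := q x / (degH x)%:R.

Definition sweep_rel (q : VH -> R) (a b : VH) : bool := ratio q b <= ratio q a.

Definition sweep_order (q : VH -> R) : seq VH := sort (sweep_rel q) (enum [set: VH]).

(* Piecewise-linear interpolation along an ordering l = x_1, x_2, ...:
   curve_seq l t = sum_k (q x_k / deg x_k) * min(deg x_k, max(0, t - vol(S_(k-1)))),
   which equals q(S_k) at t = vol(S_k) and is linear in between. *)
Fixpoint curve_seq (q : VH -> R) (l : seq VH) (t : R) : R :=
  match l with
  | [::] => 0
  | x :: l' => ratio q x * Num.min (degH x)%:R (Num.max 0 t)
               + curve_seq q l' (t - (degH x)%:R)
  end.

Definition LScurve (q : VH -> R) (t : R) : R := curve_seq q (sweep_order q) t.

End DoubleCover.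
Notation VH T := (T * bool)%type.

(* Main.v *)
Require Import Defs.
From HB Require Import structures.
From mathcomp Require Import all_boot all_order all_algebra.
From mathcomp Require Import ring lra.
Import Order.TTheory GRing.Theory Num.Theory.
Local Open Scope ring_scope.
Set Implicit Arguments. Unset Strict Implicit. Unset Printing Implicit Defensive.

Ltac mm := repeat match goal with |- context [Num.max ?x ?y] => case: (leP x y) => ? end;
  repeat match goal with |- context [Num.min ?x ?y] => case: (leP x y) => ? end.

Section Curve.
Variables (R : realFieldType) (T : finType) (e : rel T).
Local Notation V := (T * bool)%type.
Local Notation dg x := ((degH e x)%:R : R).

Lemma dg_ge0 (x : V) : 0 <= dg x. Proof. exact: ler0n. Qed.

Lemma curve_le0 (q : V -> R) (l : seq V) (t : R) : t <= 0 -> curve_seq e q l t = 0.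
Proof.
elim: l t => [//|x l IH] t ht /=.
have hd := dg_ge0 x.
rewrite IH; last lra.
have -> : Num.max 0 t = 0 by mm; lra.
have -> : Num.min (dg x) 0 = 0 by mm; lra.
by rewrite mulr0 addr0.
Qed.

Definition volL (l : seq V) : R := \sum_(x <- l) dg x.
Definition FF (l : seq V) (t : R) := Num.min (volL l) (Num.max 0 t).

Lemma volL_ge0 l : 0 <= volL l.
Proof. by rewrite /volL; apply: sumr_ge0 => x _; exact: dg_ge0. Qed.

Lemma curve_lip (q : V -> R) (l : seq V) (rho a b : R) : (forall y, y \in l -> Defs.ratio e q y <= rho) -> b <= a ->
  curve_seq e q l a - curve_seq e q l b <= rho * (FF l a - FF l b).
Proof.
elim: l a b => [|x l IH] a b hr hab.
  by rewrite /= /FF /volL !big_nil; mm; lra.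
rewrite /=.
have hx : Defs.ratio e q x <= rho by apply: hr; rewrite mem_head.
have hl : forall y, y \in l -> Defs.ratio e q y <= rho.
  by move=> y hy; apply: hr; rewrite in_cons hy orbT.
have := IH (a - dg x) (b - dg x) hl ltac:(lra).
have hd := dg_ge0 x. have hV := volL_ge0 l.
have key : forall c, FF (x :: l) c = Num.min (dg x) (Num.max 0 c) + FF l (c - dg x).
  move=> c; rewrite /FF /volL big_cons -/(volL l).
  move: (volL l) hV => W hW; mm; lra.
rewrite !key.
set m1 := Num.min (dg x) (Num.max 0 a).
set m2 := Num.min (dg x) (Num.max 0 b).
have hm : 0 <= m1 - m2 by rewrite /m1 /m2; mm; lra.
have : Defs.ratio e q x * (m1 - m2) <= rho * (m1 - m2) by apply: ler_wpM2r.
nra.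
Qed.

Lemma KS_list (q : V -> R) (l : seq V) (t : R) (w : V -> R) :
  sorted (sweep_rel e q) l -> (forall y, y \in l -> 0 <= Defs.ratio e q y) ->
  (forall y, y \in l -> 0 <= w y <= dg y) -> \sum_(y <- l) w y <= t ->
  \sum_(y <- l) Defs.ratio e q y * w y <= curve_seq e q l t.
Proof.
elim: l t => [|x l IH] t hs hpos hw hsum.
  by rewrite big_nil.
rewrite big_cons /=; rewrite big_cons in hsum.
have hsl : sorted (sweep_rel e q) l by exact: (path_sorted hs).
have hall : all (sweep_rel e q x) l.
  apply: order_path_min => //.
  by move=> a b c; rewrite /sweep_rel => h1 h2; apply: le_trans h2 h1.
have hposl : forall y, y \in l -> 0 <= Defs.ratio e q y.
  by move=> y hy; apply: hpos; rewrite in_cons hy orbT.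
have hwl : forall y, y \in l -> 0 <= w y <= dg y.
  by move=> y hy; apply: hw; rewrite in_cons hy orbT.
have hS : 0 <= \sum_(y <- l) w y.
  by rewrite big_seq; apply: sumr_ge0 => y hy; case/andP: (hwl y hy).
have /andP[hw0 hw1] : 0 <= w x <= dg x by apply: hw; rewrite mem_head.
have hrx : 0 <= Defs.ratio e q x by apply: hpos; rewrite mem_head.
have IH1 := IH (t - w x) hsl hposl hwl ltac:(lra).
have hlip := curve_lip (l := l) (q := q) (rho := Defs.ratio e q x) (a := t - w x) (b := t - dg x).
have hle : forall y, y \in l -> Defs.ratio e q y <= Defs.ratio e q x.
  by move=> y hy; move/allP: hall => /(_ y hy).
have {}hlip := hlip hle ltac:(lra).
have hV := volL_ge0 l.
have hF : FF l (t - w x) - FF l (t - dg x) <= Num.min (dg x) (Num.max 0 t) - w x.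
  rewrite /FF; move: (volL l) hV => W hW; mm; lra.
have : Defs.ratio e q x * (FF l (t - w x) - FF l (t - dg x)) <=
       Defs.ratio e q x * (Num.min (dg x) (Num.max 0 t) - w x) by apply: ler_wpM2l.
lra.
Qed.


Lemma sum_perm (l : seq V) (f : V -> R) : perm_eq l (enum [set: V]) ->
  \sum_(y <- l) f y = \sum_y f y.
Proof.
move=> hp; rewrite (perm_big _ hp) big_enum /=.
by apply: eq_bigl => i; rewrite in_setT.
Qed.

Hypothesis (deg_pos : forall x : V, (0 < degH e x)%N).

Lemma dg_neq0 (x : V) : dg x != 0.
Proof. by rewrite pnatr_eq0 -lt0n deg_pos. Qed.

Lemma ratio_mul (q : V -> R) x : Defs.ratio e q x * dg x = q x.
Proof. by rewrite /Defs.ratio divfK // dg_neq0. Qed.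

Lemma ratio_ge0 (q : V -> R) x : 0 <= q x -> 0 <= Defs.ratio e q x.
Proof. by move=> h; rewrite /Defs.ratio divr_ge0 // dg_ge0. Qed.

Lemma KS_fin (q : V -> R) (l : seq V) (t : R) (w : V -> R) :
  perm_eq l (enum [set: V]) -> sorted (sweep_rel e q) l -> (forall y, 0 <= q y) ->
  (forall y, 0 <= w y <= dg y) -> \sum_y w y <= t ->
  \sum_y Defs.ratio e q y * w y <= curve_seq e q l t.
Proof.
move=> hp hs hq hw hsum; rewrite -(sum_perm _ hp).
apply: KS_list => //; first by move=> y _; exact: ratio_ge0.
by rewrite (sum_perm _ hp).
Qed.

Lemma sweep_perm (q : V -> R) : perm_eq (sweep_order e q) (enum [set: V]).
Proof. by rewrite /sweep_order perm_sort. Qed.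

Lemma sweep_sorted (q : V -> R) : sorted (sweep_rel e q) (sweep_order e q).
Proof.
apply: sort_sorted => a b; rewrite /sweep_rel; exact: le_total.
Qed.

Lemma LS_bound (q : V -> R) (t : R) (w : V -> R) :
  (forall y, 0 <= q y) -> (forall y, 0 <= w y <= dg y) -> \sum_y w y <= t ->
  \sum_y Defs.ratio e q y * w y <= LScurve e q t.
Proof.
move=> hq hw hs; apply: KS_fin => //; [exact: sweep_perm | exact: sweep_sorted].
Qed.

Lemma LS_ind (q : V -> R) (t : R) (P : pred V) :
  (forall y, 0 <= q y) -> \sum_y (P y)%:R * dg y <= t ->
  \sum_y (P y)%:R * q y <= LScurve e q t.
Proof.
move=> hq hs.
have := LS_bound (w := fun y => (P y)%:R * dg y) hq _ hs.
have -> : \sum_y Defs.ratio e q y * ((P y)%:R * dg y) = \sum_y (P y)%:R * q y.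
  by apply: eq_bigr => y _; rewrite mulrCA ratio_mul.
apply => y; case: (P y); rewrite ?mul1r ?mul0r lexx ?dg_ge0 //.
Qed.

Fixpoint greedy (l : seq V) (t : R) (x : V) : R :=
  match l with
  | [::] => 0
  | y :: l' => (y == x)%:R * Num.min (dg y) (Num.max 0 t) + greedy l' (t - dg y) x
  end.

Lemma curve_greedy (q : V -> R) l t :
  curve_seq e q l t = \sum_x Defs.ratio e q x * greedy l t x.
Proof.
elim: l t => [|y l IH] t /=; first by rewrite big1 // => x _; rewrite mulr0.
rewrite IH.
under eq_bigr => x _ do rewrite mulrDr.
rewrite big_split /=; congr (_ + _).
rewrite (bigD1 y) //= eqxx mul1r big1 ?addr0 // => x /negbTE hx.
by rewrite eq_sym hx mul0r mulr0.
Qed.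

Lemma greedy_ge0 l t x : 0 <= greedy l t x.
Proof.
elim: l t => [|y l IH] t /=; first by [].
apply: addr_ge0 => //; apply: mulr_ge0; first exact: ler0n.
have := dg_ge0 y; mm; lra.
Qed.

Lemma greedy_notin l t x : x \notin l -> greedy l t x = 0.
Proof.
elim: l t => [|y l IH] t //=; rewrite in_cons negb_or => /andP[h1 h2].
by rewrite IH // eq_sym (negbTE h1) mul0r addr0.
Qed.

Lemma greedy_le l t x : uniq l -> greedy l t x <= dg x.
Proof.
elim: l t => [|y l IH] t /=; first by rewrite dg_ge0.
case/andP=> hy hu; case: eqP => [<-|_].
  rewrite greedy_notin // mul1r addr0; have := dg_ge0 y; mm; lra.
by rewrite mul0r add0r IH.
Qed.

Lemma greedy_sum l t : \sum_x greedy l t x <= Num.max 0 t.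
Proof.
elim: l t => [|y l IH] t /=.
  by rewrite big1 //; mm; lra.
rewrite big_split /= (bigD1 y) //= eqxx mul1r big1 ?addr0; last first.
  by move=> x /negbTE hx; rewrite eq_sym hx mul0r.
have := IH (t - dg y); have := dg_ge0 y.
move: (\sum_x greedy l (t - dg y) x) => G.
mm; lra.
Qed.

Lemma LS_le_curve (q : V -> R) l t : perm_eq l (enum [set: V]) ->
  sorted (sweep_rel e q) l -> (forall y, 0 <= q y) -> 0 <= t ->
  LScurve e q t <= curve_seq e q l t.
Proof.
move=> hp hs hq ht; rewrite /LScurve curve_greedy.
apply: KS_fin => //.
  move=> y; rewrite greedy_ge0 greedy_le //.
  by rewrite (perm_uniq (sweep_perm q)) enum_uniq.
apply: le_trans (greedy_sum _ _) _; mm; lra.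
Qed.

Lemma curve_prefix (q : V -> R) l j :
  curve_seq e q l (volL (take j l)) = \sum_(x <- take j l) q x.
Proof.
elim: l j => [|y l IH] j; first by rewrite /= big_nil.
case: j => [|j].
  rewrite /= /volL !big_nil curve_le0; last by have := dg_ge0 y; lra.
  have := dg_ge0 y; mm; try lra; have -> : dg y = 0 by have := dg_ge0 y; lra.
  by rewrite mulr0 addr0.
rewrite /= big_cons {1 2}/volL big_cons -/(volL (take j l)).
have hV := volL_ge0 (take j l).
have -> : dg y + volL (take j l) - dg y = volL (take j l) by ring.
rewrite IH -(ratio_mul q y).
have -> // : Num.min (dg y) (Num.max 0 (dg y + volL (take j l))) = dg y.
have := dg_ge0 y; mm; lra.
Qed.

End Curve.

Section Graph.
Variables (R : realFieldType) (T : finType) (e : rel T).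
Hypothesis e_sym : symmetric e.
Local Notation V := (T * bool)%type.
Local Notation dg x := ((degH e x)%:R : R).

Definition flip (x : V) : V := (x.1, ~~ x.2).
Lemma flipK : involutive flip. Proof. by case=> a b; rewrite /flip /= negbK. Qed.
Lemma flip_inj : injective flip. Proof. exact: inv_inj flipK. Qed.

Lemma adjH_flip x y : adjH e (flip x) (flip y) = adjH e x y.
Proof. by rewrite /adjH /=; case: x.2; case: y.2. Qed.

Lemma adjH_sym x y : adjH e x y = adjH e y x.
Proof. by rewrite /adjH e_sym eq_sym. Qed.

Lemma adjH_neq x y : adjH e x y -> x != y.
Proof. by case/andP=> _; apply: contra => /eqP ->. Qed.

Lemma degH_flip x : degH e (flip x) = degH e x.
Proof.
rewrite /degH -(card_preimset _ flip_inj); apply: eq_card => y.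
by rewrite !inE adjH_flip.
Qed.

Lemma Wmat_flip x y : Wmat R e (flip y) (flip x) = Wmat R e y x.
Proof.
by rewrite /Wmat adjH_flip degH_flip (inj_eq flip_inj).
Qed.

Lemma Wmat_ge0 x y : 0 <= Wmat R e x y.
Proof.
rewrite /Wmat; apply: addr_ge0; apply: mulr_ge0; rewrite ?invr_ge0 ?ler0n //.
by rewrite divr_ge0 ?ler0n.
Qed.

Lemma mulW_flip (q : V -> R) x : mulW e q (flip x) = mulW e (fun y => q (flip y)) x.
Proof.
rewrite /mulW (reindex_inj flip_inj) /=.
by apply: eq_bigr => y _; rewrite Wmat_flip.
Qed.

Lemma mulWB (f g : V -> R) x : mulW e (fun y => f y - g y) x = mulW e f x - mulW e g x.
Proof. by rewrite /mulW -sumrB; apply: eq_bigr => y _; rewrite mulrBl. Qed.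

Lemma mulW_le (f g : V -> R) x : (forall y, f y <= g y) -> mulW e f x <= mulW e g x.
Proof. by move=> h; apply: ler_sum => y _; apply: ler_wpM2r; rewrite ?Wmat_ge0. Qed.

Lemma mulW_ge0 (f : V -> R) x : (forall y, 0 <= f y) -> 0 <= mulW e f x.
Proof. by move=> h; apply: sumr_ge0 => y _; apply: mulr_ge0; rewrite ?Wmat_ge0. Qed.


Section Count.
Variable S : {set V}.
Definition Aset (y : V) : {set V} := [set x | adjH e y x].
Definition Pairs : {set V * V} := [set p | (p.1 \in S) && (p.2 \in Aset p.1 :\: S)].

Lemma deg_split y : (#|Aset y :&: S| + #|Aset y :\: S|)%N = degH e y.
Proof. by rewrite cardsID. Qed.

Lemma sumN : (\sum_(y in S) #|Aset y :\: S|)%N = #|Pairs|.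
Proof.
have -> : (\sum_(y in S) #|Aset y :\: S|)%N = (\sum_(y in S) \sum_(x in Aset y :\: S) 1)%N.
  by apply: eq_bigr => y _; rewrite sum1_card.
rewrite pair_big_dep /= sum1_card; apply: eq_card => p; by rewrite inE.
Qed.

Lemma sumA : (\sum_(y in ~: S) #|Aset y :&: S|)%N = #|Pairs|.
Proof.
have -> : (\sum_(y in ~: S) #|Aset y :&: S|)%N = (\sum_(y in ~: S) \sum_(x in Aset y :&: S) 1)%N.
  by apply: eq_bigr => y _; rewrite sum1_card.
rewrite pair_big_dep /= sum1_card.
have inj : injective (fun p : V * V => (p.2, p.1)) by move=> [a b] [c d] /= [-> ->].
rewrite -(card_preimset _ inj); apply: eq_card => -[a b].
rewrite [in RHS]inE /= [in RHS]inE /= -topredE /= !inE /=.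
rewrite adjH_sym; case: (a \in S); case: (b \in S); rewrite ?andbT ?andbF /= ?andbT ?andbF //.
Qed.

Lemma boundary_Pairs : #|boundaryH e S| = #|Pairs|.
Proof.
have -> : boundaryH e S = [set [set p.1; p.2] | p in Pairs].
  apply/setP => E; rewrite !inE; apply/idP/imsetP.
  - case/andP => /existsP[x /existsP[y /andP[hxy /eqP hE]]] hc.
    have hne := adjH_neq hxy.
    have hxy' : adjH e y x by rewrite adjH_sym.
    move: hc; rewrite hE.
    case hx: (x \in S); case hy: (y \in S) => hc.
    + have : [set x; y] :&: S = [set x; y].
        by apply/setP => z; rewrite !inE; case: eqP => [->|_]; case: eqP => [->|_]; rewrite ?hx ?hy ?andbF.
      by move=> h; move: hc; rewrite h cards2 hne.
    + exists (x, y); last by [].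
      by rewrite !inE hx hy /= hxy.
    + exists (y, x); last by rewrite setUC.
      by rewrite !inE hx hy /= hxy'.
    + have : [set x; y] :&: S = set0.
        by apply/setP => z; rewrite !inE; case: eqP => [->|_]; case: eqP => [->|_]; rewrite ?hx ?hy ?andbF.
      by move=> h; move: hc; rewrite h cards0.
  - case=> -[a b]; rewrite !inE /= => /andP[ha /andP[hb hab]] ->.
    apply/andP; split.
      by apply/existsP; exists a; apply/existsP; exists b; rewrite hab eqxx.
    have : [set a; b] :&: S = [set a].
      apply/setP => z; rewrite !inE; case: eqP => [->|_]; first by rewrite ha ?eqxx ?orbT.
      by case: eqP => [->|_]; rewrite ?(negbTE hb) ?andbF //; case: eqP.
    by move=> ->; rewrite cards1.
rewrite card_in_imset // => -[a b] [c d]; rewrite !inE /= => /andP[ha /andP[hb _]] /andP[hc /andP[hd _]] h.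
have h1 : a \in [set c; d] by rewrite -h !inE eqxx.
have h2 : b \in [set c; d] by rewrite -h !inE eqxx orbT.
move: h1 h2; rewrite !inE => /orP[/eqP ->|/eqP Ead] /orP[/eqP Ebc|/eqP ->] //.
- by move: hb; rewrite Ebc hc.
- by move: hd; rewrite -Ead ha.
- by move: hd; rewrite -Ead ha.
Qed.

End Count.
End Graph.

Lemma sum_ind (R : realFieldType) (I : finType) (A : {pred I}) (f : I -> R) :
  \sum_(x in A) f x = \sum_x (x \in A)%:R * f x.
Proof.
rewrite big_mkcond /=; apply: eq_bigr => x _.
by case: (x \in A); rewrite ?mul1r ?mul0r.
Qed.

Lemma sum_card (R : realFieldType) (I : finType) (A : {set I}) :
  \sum_x ((x \in A)%:R : R) = #|A|%:R.
Proof.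
rewrite -sumr_const [RHS]big_mkcond /=; apply: eq_bigr => x _.
by case: (x \in A).
Qed.

Lemma natr_sumN (R : realFieldType) (I : finType) (A : {pred I}) (F : I -> nat) :
  ((\sum_(i in A) F i)%N)%:R = \sum_(i in A) ((F i)%:R : R).
Proof. exact: (big_morph _ (natrD R) (mulr0n 1)). Qed.

Unset Implicit Arguments.
Set Strict Implicit.

Theorem lemma10 (R : realFieldType) (T : finType) (e : rel T)
  (e_sym : symmetric e) (e_irr : irreflexive e)
  (no_isolated : forall x : VH T, (0 < degH e x)%N)
  (alpha : R) (halpha : 0 < alpha <= 1)
  (s r prs prr : VH T -> R)
  (s_ge0 : forall x, 0 <= s x) (r_ge0 : forall x, 0 <= r x)
  (h_prs : is_pr e alpha s prs) (h_prr : is_pr e alpha r prr)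
  (ord : seq (VH T))
  (ord_perm : perm_eq ord (enum [set: VH T]))
  (ord_sorted : sorted (sweep_rel e (sigmaH (fun x => prs x - prr x))) ord)
  (j : nat) (hj : (1 <= j <= #|T| - 1)%N) :
  let p := sigmaH (fun x => prs x - prr x) in
  let S := [set x in take j ord] in
  let v := (volH e S)%:R : R in
  let b := (#|boundaryH e S|)%:R : R in
  LScurve e p v <=
    alpha * (LScurve e s v + LScurve e r v)
    + (1 - alpha) / 2 * (LScurve e p (v - b) + LScurve e p (v + b)).
Proof.
cbv zeta.
set p := sigmaH (fun x => prs x - prr x).
set S := [set x in take j ord].
set v := (volH e S)%:R.
set b := (#|boundaryH e S|)%:R.
case/andP: halpha => ha0 ha1.
set q := fun x => prs x - prr x.
have p_ge0 : forall y, 0 <= p y by move=> y; rewrite /p /sigmaH le_max lexx.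
have hv : v = \sum_x (x \in S)%:R * (degH e x)%:R.
  by rewrite /v /volH natr_sum sum_ind.
set P := fun x => (x \in S) && (0 < q x - q (flip x)).
have stepL : LScurve e p v <= \sum_x (x \in S)%:R * p x.
  have ord_uniq : uniq ord by rewrite (perm_uniq ord_perm) enum_uniq.
  have hvL : v = volL R e (take j ord).
    rewrite /v /volH natr_sum /volL (big_uniq _ (take_uniq _ ord_uniq)).
    by apply: eq_bigl => x; rewrite inE.
  have hv0 : 0 <= v by rewrite /v ler0n.
  apply: (le_trans (LS_le_curve ord_perm ord_sorted p_ge0 hv0)).
  rewrite hvL (curve_prefix no_isolated) (big_uniq _ (take_uniq _ ord_uniq)) -sum_ind.
  by rewrite le_eqVlt; apply/orP; left; apply/eqP; apply: eq_bigl => x; rewrite inE.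
have stepM : \sum_x (x \in S)%:R * p x <=
   alpha * (\sum_x (P x)%:R * s x + \sum_x (P x)%:R * r (flip x))
   + (1 - alpha) * \sum_x (x \in S)%:R * mulW e p x.
  have hq : forall y, q y = alpha * (s y - r y) + (1 - alpha) * mulW e q y.
    move=> y; rewrite /q mulWB h_prs h_prr; ring.
  have hd : forall x, q x - q (flip x) = alpha * (s x - r x - (s (flip x) - r (flip x)))
      + (1 - alpha) * mulW e (fun y => q y - q (flip y)) x.
    move=> x; rewrite mulWB -mulW_flip (hq x) (hq (flip x)); ring.
  have hdp : forall x, mulW e (fun y => q y - q (flip y)) x <= mulW e p x.
    move=> x; apply: mulW_le => y; rewrite /p /sigmaH le_max; apply/orP; right; exact: lexx.
  have hpt : forall x, (x \in S)%:R * p x <= alpha * ((P x)%:R * s x + (P x)%:R * r (flip x))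
      + (1 - alpha) * ((x \in S)%:R * mulW e p x).
    move=> x; rewrite /P.
    have hM2 : 0 <= mulW e p x by apply: mulW_ge0.
    case: (x \in S); last first.
      by rewrite /= !mul0r addr0 !mulr0 addr0.
    rewrite /= ?mulr1n !mul1r.
    have hpx : p x = Num.max 0 (q x - q (flip x)) by [].
    rewrite hpx.
    have := hd x; have := hdp x.
    move: (q x - q (flip x)) (mulW e (fun y => q y - q (flip y)) x) => dx M1 h1 h2.
    have h3 : (1 - alpha) * M1 <= (1 - alpha) * mulW e p x by apply: ler_wpM2l => //; lra.
    have h4 : 0 <= (1 - alpha) * mulW e p x by apply: mulr_ge0 => //; lra.
    have h5 := mulr_ge0 (ltW ha0) (s_ge0 (flip x)).
    have h6 := mulr_ge0 (ltW ha0) (r_ge0 x).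
    case: (ltP 0 dx) => h.
      rewrite /= ?mulr1n !mul1r; mm; try lra.
    rewrite /= ?mulr0n !mul0r addr0 mulr0 add0r; mm; lra.
  apply: le_trans (ler_sum _ (fun x _ => hpt x)) _.
  by rewrite big_split /= -mulr_sumr -mulr_sumr big_split /=.
have hPv : \sum_x (P x)%:R * (degH e x)%:R <= v.
  rewrite hv; apply: ler_sum => x _; rewrite /P.
  case: (x \in S); case: (0 < q x - q (flip x)); rewrite /= ?mul1r ?mul0r ?ler0n //.
have stepS : \sum_x (P x)%:R * s x <= LScurve e s v.
  exact: (LS_ind no_isolated).
have stepR : \sum_x (P x)%:R * r (flip x) <= LScurve e r v.
  rewrite (reindex_inj (@flip_inj T)) /=.
  under eq_bigr => y _ do rewrite flipK.
  apply: (LS_ind no_isolated (P := fun y => P (flip y))) => //.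
  apply: le_trans hPv.
  rewrite [leRHS](reindex_inj (@flip_inj T)) /=.
  by under [leRHS]eq_bigr => y _ do rewrite degH_flip.
have stepW : \sum_x (x \in S)%:R * mulW e p x <= 2^-1 * (LScurve e p (v - b) + LScurve e p (v + b)).
  set ay := fun y => (#|Aset e y :&: S|)%:R : R.
  have hWsum : forall y, \sum_x (x \in S)%:R * Wmat R e y x
      = 2^-1 * (y \in S)%:R + 2^-1 * (ay y / (degH e y)%:R).
    move=> y; rewrite /Wmat.
    under eq_bigr => x _ do rewrite mulrDr.
    rewrite big_split /=; congr (_ + _).
      rewrite (bigD1 y) //= eqxx big1 ?addr0; last first.
        by move=> x hx; rewrite eq_sym (negbTE hx) /= mulr0n mulr0 mulr0.
      by rewrite mulr1n mulr1 mulrC.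
    have h : forall x, (x \in S)%:R * (2^-1 * ((adjH e y x)%:R / (degH e y)%:R))
        = (x \in Aset e y :&: S)%:R * (2^-1 / (degH e y)%:R) :> R.
      move=> x; rewrite !inE; case: (x \in S); case: (adjH e y x);
        rewrite /= ?mulr1n ?mulr0n; ring.
    under eq_bigr => x _ do rewrite h.
    by rewrite -mulr_suml sum_card /ay; ring.
  have hW : \sum_x (x \in S)%:R * mulW e p x
      = \sum_y p y * (2^-1 * (y \in S)%:R + 2^-1 * (ay y / (degH e y)%:R)).
    rewrite /mulW.
    under eq_bigr => x _ do rewrite mulr_sumr.
    rewrite exchange_big /=; apply: eq_bigr => y _.
    rewrite -hWsum mulr_sumr; apply: eq_bigr => x _; ring.
  set w1 := fun y => (y \in S)%:R * ay y.
  set w2 := fun y => (y \in S)%:R * (degH e y)%:R + (y \in ~: S)%:R * ay y.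
  have hsplit : forall y, p y * (2^-1 * (y \in S)%:R + 2^-1 * (ay y / (degH e y)%:R))
      = 2^-1 * (Defs.ratio e p y * w1 y + Defs.ratio e p y * w2 y).
    move=> y; have hd0 := dg_neq0 R no_isolated y.
    rewrite -{1}(ratio_mul no_isolated p y) /w1 /w2 in_setC.
    case: (y \in S); rewrite /= ?mulr1n ?mulr0n; field => //.
  have ha_le : forall y, 0 <= ay y <= (degH e y)%:R.
    move=> y; rewrite /ay -(deg_split e S y) natrD ler0n /=.
    by rewrite lerDl ler0n.
  have hn : (\sum_(y in S) #|Aset e y :&: S| + #|boundaryH e S|)%N = volH e S.
    rewrite (boundary_Pairs e_sym) -sumN -big_split /=.
    by apply: eq_bigr => y _; rewrite deg_split.
  have hsum1 : \sum_y w1 y = v - b.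
    by rewrite /w1 -sum_ind /v /b -hn natrD addrK /ay natr_sumN.
  have hsum2 : \sum_y w2 y = v + b.
    rewrite /w2 big_split /= -!sum_ind /v /volH natr_sumN /b (boundary_Pairs e_sym) -(sumA e_sym) (big_morph (fun n : nat => n%:R : R) (natrD R) (mulr0n 1)).
    by [].
  rewrite hW.
  under eq_bigr => y _ do rewrite hsplit.
  rewrite -mulr_sumr big_split /=.
  apply: ler_wpM2l; first by rewrite invr_ge0 ler0n.
  have hw1 : forall y, 0 <= w1 y <= (degH e y)%:R.
    move=> y; rewrite /w1; have := ha_le y; case: (y \in S); rewrite /= ?mulr1n ?mulr0n ?mul1r ?mul0r ?lexx ?ler0n //.
  have hw2 : forall y, 0 <= w2 y <= (degH e y)%:R.
    move=> y; rewrite /w2 in_setC; have := ha_le y; have := dg_ge0 R e y.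
    case: (y \in S); rewrite /= ?mulr1n ?mulr0n ?mul1r ?mul0r ?addr0 ?add0r ?lexx ?ler0n //.
  apply: lerD; apply: LS_bound => //; rewrite ?hsum1 ?hsum2 //.
apply: (le_trans stepL); apply: (le_trans stepM).
rewrite -mulrA.
apply: lerD; first by apply: ler_wpM2l; [lra | exact: lerD].
apply: ler_wpM2l; first lra.
exact: stepW.
Qed.
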